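(* In the setting described in the context, assume the following stable recovery property holds: there exist $C>0$ and $\delta>0$ such that for any $\mathcal{S}\in\mathfrak{M}$, any $\overline{\mathbf{h}}\in\mathbb{R}^{S\times K}_{\mathcal{S}}$, any $X=\mathcal{A}P(\overline{\mathbf{h}})+e$ with $\|e\|\le\delta$, and any $\mathcal{S}^*\in\mathfrak{M}$ and $\mathbf{h}^*\in\mathbb{R}^{S\times K}_{\mathcal{S}^*}$ such that $\|\mathcal{A}P(\mathbf{h}^* )-X\|\le\|e\|$, we have $$d_2([\mathbf{h}^*],[\overline{\mathbf{h}}])\le C\min\left(\|P(\overline{\mathbf{h}})\|_\infty^{\frac1K-1},\|P(\mathbf{h}^* )\|_\infty^{\frac1K-1}\right)\|e\|.$$ Then $\mathcal{A}$ satisfies the Deep-$\mathfrak{M}$-Null Space Property with constants $$\gamma=C\,S^{\frac{K-1}{2}}\sqrt{K}\,\sigma_{max}\qquad\text{and}\qquad\rho=\delta,$$ where $\sigma_{max}$ is the spectral radius of $\mathcal{A}$ (its largest singular value, so that $\|\mathcal{A}T\|\le\sigma_{max}\|T\|$ for all $T$).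
   Context: Let $K,S\ge 1$ and $m_1,\dots,m_{K+1}$ be positive integers, $\mathbb{N}_S=\{1,\dots,S\}$, and for $k=1,\dots,K$ let $M_k:\mathbb{R}^S\to\mathbb{R}^{m_k\times m_{k+1}}$ be linear. Parameters are $\mathbf{h}=(\mathbf{h}_1,\dots,\mathbf{h}_K)\in\mathbb{R}^{S\times K}$, $\mathbf{h}_k\in\mathbb{R}^S$ with entries $\mathbf{h}_{k,i}$. $\mathbb{R}^{S^K}$ is the space of real order-$K$ tensors with all axes of size $S$, indexed by $\mathbf{i}\in\mathbb{N}_S^K$; $\|\cdot\|$ is the Euclidean norm and $\|\cdot\|_p$ the entrywise $\ell^p$ norm. Segre embedding: $P(\mathbf{h})_{\mathbf{i}}=\mathbf{h}_{1,\mathbf{i}_1}\cdots\mathbf{h}_{K,\mathbf{i}_K}$. The lifting operator $\mathcal{A}:\mathbb{R}^{S^K}\to\mathbb{R}^{m_1\times m_{K+1}}$ is the unique linear map with $\mathcal{A}P(\mathbf{h})=M_1(\mathbf{h}_1)\cdots M_K(\mathbf{h}_K)$ for all $\mathbf{h}$; matrices carry the Frobenius norm. A support is $\mathcal{S}=(\mathcal{S}_1,\dots,\mathcal{S}_K)$, $\mathcal{S}_k\subset\mathbb{N}_S$; unions are componentwise; $\mathbf{i}\in\mathcal{S}$ means $\mathbf{i}_k\in\mathcal{S}_k$ for all $k$. $\mathbb{R}^{S\times K}_{\mathcal{S}}=\{\mathbf{h}:\mathbf{h}_{k,i}=0\text{ whenever }i\notin\mathcal{S}_k\}$, $\mathbb{T}_{\mathcal{S}}=\{T: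 T_{\mathbf{i}}=0\text{ whenever }\mathbf{i}\notin\mathcal{S}\}$, $P_{\mathcal{S}}$ the orthogonal projection onto $\mathbb{T}_{\mathcal{S}}$, $\mathcal{A}_{\mathcal{S}}=\mathcal{A}P_{\mathcal{S}}$. $\mathfrak{M}$ is a given finite family of supports. Deep-$\mathfrak{M}$-Null Space Property with constants $(\gamma,\rho)$, $\gamma\ge1,\rho>0$: for all $\mathcal{S},\mathcal{S}'\in\mathfrak{M}$, every $T\in P(\mathbb{R}^{S\times K}_{\mathcal{S}})+P(\mathbb{R}^{S\times K}_{\mathcal{S}'})$ with $\|\mathcal{A}_{\mathcal{S}\cup\mathcal{S}'}T\|\le\rho$ and every $T'\in\ker\mathcal{A}_{\mathcal{S}\cup\mathcal{S}'}$ satisfy $\|T\|\le\gamma\|T-P_{\mathcal{S}\cup\mathcal{S}'}T'\|$. Metric $d_p$: let $\mathbb{R}^{S\times K}_*=\{\mathbf{h}:\mathbf{h}_k\ne0\ \forall k\}$; $\mathbf{h}\sim\mathbf{g}$ iff there are $\lambda_1,\dots,\lambda_K$ with $\prod_k\lambda_k=1$ and $\mathbf{h}_k=\lambda_k\mathbf{g}_k$ for all $k$; $[\mathbf{h}]$ is the class of $\mathbf{h}$. With $\mathbb{R}^{S\times K}_{diag}=\{\mathbf{h}\in\mathbb{R}^{S\times K}_*:\|\mathbf{h}_k\|_\infty=\|\mathbf{h}_1\|_\infty\ \forall k\}$, $d_p([\mathbf{h}],[\mathbf{g}])=\inf\{\|\mathbf{h}'-\mathbf{g}'\|_p:\mathbf{h}'\in[\mathbf{h}]\cap\mathbb{R}^{S\times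 K}_{diag},\ \mathbf{g}'\in[\mathbf{g}]\cap\mathbb{R}^{S\times K}_{diag}\}$ for $\mathbf{h},\mathbf{g}\in\mathbb{R}^{S\times K}_*$. *)

(* Defs.v *)
From HB Require Import structures.
From mathcomp Require Import all_boot all_order all_algebra.
From mathcomp Require Import all_classical all_reals exp.
Set Implicit Arguments. Unset Strict Implicit. Unset Printing Implicit Defensive.
Import Order.TTheory GRing.Theory Num.Theory.
Local Open Scope ring_scope.
Local Open Scope classical_set_scope.


Notation param R S K := 'M[R]_(S, K).
Notation midx S K := {ffun 'I_K -> 'I_S}.
Notation tensor R S K := {ffun {ffun 'I_K -> 'I_S} -> R^o}.
Notation suppT S K := {ffun 'I_K -> {set 'I_S}}.

Section Defs.
Variables (R : realType) (S K : nat).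
Local Notation param := (param R S K).
Local Notation midx := (midx S K).
Local Notation tensor := (tensor R S K).
Local Notation suppT := (suppT S K).


Definition segre (h : param) : tensor :=
  [ffun i : midx => \prod_(k < K) h (i k) k].

Definition tnorm (T : tensor) : R := Num.sqrt (\sum_(i : midx) T i ^+ 2).
Definition tnorm_inf (T : tensor) : R := \big[Order.max/0]_(i : midx) `|T i|.
Definition pnorm2 (h : param) : R := Num.sqrt (\sum_(i < S) \sum_(k < K) h i k ^+ 2).
Definition colnorm_inf (h : param) (k : 'I_K) : R := \big[Order.max/0]_(i < S) `|h i k|.

Definition supp_union (s s' : suppT) : suppT := [ffun k => s k :|: s' k].
Definition in_supp (i : midx) (s : suppT) : bool := [forall k, i k \in s k].
Definition param_on (s : suppT) (h : param) : Prop :=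
  forall k i, i \notin s k -> h i k = 0.
Definition proj_supp (s : suppT) (T : tensor) : tensor :=
  [ffun i => if in_supp i s then T i else 0].

Definition param_star (h : param) : Prop := forall k : 'I_K, exists i : 'I_S, h i k != 0.
Definition param_equiv (h g : param) : Prop :=
  exists lam : 'I_K -> R, \prod_(k < K) lam k = 1 /\ forall i k, h i k = lam k * g i k.
Definition param_diag (h : param) : Prop :=
  param_star h /\ forall k l, colnorm_inf h k = colnorm_inf h l.
Definition d2 (h g : param) : R :=
  inf [set r : R | exists h' g' : param,
           [/\ param_equiv h' h, param_diag h', param_equiv g' g, param_diag g'
              & r = pnorm2 (h' - g')]].


End Defs.

Section Lift.
Variables (R : realType) (S K : nat) (m : nat -> nat).

Definition frob (p q : nat) (X : 'M[R]_(p, q)) : R :=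
  Num.sqrt (\sum_(i < p) \sum_(j < q) X i j ^+ 2).

(* column h_k as a vector of R^S (zero if k >= K, never used) *)
Definition hcol (h : param R S K) (k : nat) : 'rV[R]_S :=
  \row_(i < S) (match @insub _ (fun k => k < K)%N 'I_K k with Some o => h i o | None => 0 end).

(* M_1(h_1) ... M_n(h_n), with M_{k+1} = M k (0-based) *)
Fixpoint chain (M : forall k : nat, {linear 'rV[R]_S -> 'M[R]_(m k, m k.+1)})
  (h : param R S K) (n : nat) : 'M[R]_(m 0, m n) :=
  match n return 'M[R]_(m 0, m n) with
  | 0 => 1%:M
  | n'.+1 => chain M h n' *m M n' (hcol h n')
  end.

Definition sigma_max (A : {linear tensor R S K -> 'M[R]_(m 0, m K)}) : R :=
  sup [set r : R | exists T : tensor R S K, tnorm T <= 1 /\ r = frob (A T)].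

Definition deep_NSP (A : {linear tensor R S K -> 'M[R]_(m 0, m K)})
  (Mf : {set suppT S K}) (gamma rho : R) : Prop :=
  forall s s', s \in Mf -> s' \in Mf ->
  forall T : tensor R S K,
    (exists h g : param R S K, param_on s h /\ param_on s' g /\ T = segre h + segre g) ->
    frob (A (proj_supp (supp_union s s') T)) <= rho ->
    forall T' : tensor R S K, A (proj_supp (supp_union s s') T') = 0 ->
    tnorm T <= gamma * tnorm (T - proj_supp (supp_union s s') T').

Definition stable_recovery (A : {linear tensor R S K -> 'M[R]_(m 0, m K)})
  (Mf : {set suppT S K}) (C delta : R) : Prop :=
  forall s, s \in Mf -> forall hbar : param R S K, param_on s hbar -> param_star hbar ->
  forall e : 'M[R]_(m 0, m K), frob e <= delta ->
  let X := A (segre hbar) + e in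
  forall s', s' \in Mf -> forall hs : param R S K, param_on s' hs -> param_star hs ->
  frob (A (segre hs) - X) <= frob e ->
  d2 hs hbar <= C * Order.min (powR (tnorm_inf (segre hbar)) (K%:R^-1 - 1))
                              (powR (tnorm_inf (segre hs)) (K%:R^-1 - 1)) * frob e.

End Lift.

(* Main.v *)
Require Import Defs.
Set Warnings "-all".
From HB Require Import structures.
From mathcomp Require Import all_boot all_order all_algebra.
From mathcomp Require Import all_classical all_reals exp.
From mathcomp Require Import ring lra.
Import Order.TTheory GRing.Theory Num.Theory.
Set Implicit Arguments. Unset Strict Implicit.
Local Open Scope ring_scope.
Lemma sumsq_le (R : realType) (I : finType) (x : I -> R) :
  (\sum_i x i) ^+ 2 <= #|I|%:R * \sum_i x i ^+ 2.
Proof.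
have E1 : (\sum_i x i) ^+ 2 = \sum_i \sum_j x i * x j by rewrite expr2 big_distrlr.
have L : 2 * (\sum_i x i) ^+ 2 <= \sum_i \sum_j (x i ^+ 2 + x j ^+ 2).
  rewrite E1 mulr_sumr; apply: ler_sum => i _; rewrite mulr_sumr; apply: ler_sum => j _.
  have := sqr_ge0 (x i - x j); rewrite sqrrB; lra.
have E2 : \sum_i \sum_j (x i ^+ 2 + x j ^+ 2) = 2 * (#|I|%:R * \sum_i x i ^+ 2).
  have cI : forall s : R, s *+ #|I| = #|I|%:R * s by move=> s; rewrite mulr_natl.
  under eq_bigr => i _ do rewrite big_split /= sumr_const cI.
  rewrite big_split /= sumr_const cI -mulr_sumr; ring.
lra.
Qed.

Lemma telesc (R : comRingType) n (a b : nat -> R) :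
  \prod_(j < n) a j - \prod_(j < n) b j =
  \sum_(k < n) \prod_(j < n) (if (j < k)%N then b j else if j == k :> nat then a j - b j else a j).
Proof.
elim: n => [|n IH]; first by rewrite !big_ord0 subrr.
rewrite big_ord_recr /= [X in _ - X]big_ord_recr /=.
rewrite [RHS]big_ord_recr /=.
have -> : \sum_(i < n) \prod_(j < n.+1)
   (if (j < widen_ord (leqnSn n) i)%N then b j else if j == widen_ord (leqnSn n) i :> nat then a j - b j else a j)
   = (\sum_(i < n) \prod_(j < n) (if (j < i)%N then b j else if j == i :> nat then a j - b j else a j)) * a n.
  rewrite mulr_suml; apply: eq_bigr => i _ /=.
  rewrite big_ord_recr /= ltnNge (ltnW (ltn_ord i)) /= eqn_leq leqNgt ltn_ord /=.
  done.
rewrite -IH big_ord_recr /= ltnn eqxx.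
have -> : \prod_(i < n) (if (i < n)%N then b i else if i == n :> nat then a i - b i else a i) = \prod_(i < n) b i.
  by apply: eq_bigr => i _; rewrite ltn_ord.
ring.
Qed.
Section Lip.
Variables (R : realType) (S K' : nat).
Local Notation K := K'.+1.
Local Notation param := (param R S K).
Local Notation tensor := (tensor R S K).

Definition wk (h g : param) (k : 'I_K) : param :=
  \matrix_(s, j) (if (j < k)%N then g s j else if j == k then h s j - g s j else h s j).

Lemma segre_diff (h g : param) : segre h - segre g = \sum_k segre (wk h g k).
Proof.
apply/ffunP => i; rewrite sum_ffunE !ffunE.
pose a j := h (i (inord j)) (inord j). pose b j := g (i (inord j)) (inord j).
have Ea : \prod_(k < K) h (i k) k = \prod_(j < K) a j.
  by apply: eq_bigr => j _; rewrite /a inord_val.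
have Eb : \prod_(k < K) g (i k) k = \prod_(j < K) b j.
  by apply: eq_bigr => j _; rewrite /b inord_val.
rewrite Ea Eb telesc; apply: eq_bigr => k _; rewrite ffunE.
apply: eq_bigr => j _; rewrite mxE /a /b inord_val.
by case: ifP => // _; case: ifP.
Qed.

Lemma tnorm_sq (T : tensor) : tnorm T ^+ 2 = \sum_i T i ^+ 2.
Proof. by rewrite /tnorm sqr_sqrtr // sumr_ge0 // => i _; exact: sqr_ge0. Qed.

Lemma tnorm_segre_sq (w : param) :
  tnorm (segre w) ^+ 2 = \prod_(j < K) \sum_(s < S) w s j ^+ 2.
Proof.
rewrite tnorm_sq (bigA_distr_bigA (fun j s => w s j ^+ 2)) /=.
by apply: eq_bigr => i _; rewrite ffunE prodrXl.
Qed.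


Lemma sq_le (x c : R) : `|x| <= c -> x ^+ 2 <= c ^+ 2.
Proof. move/ler_normlP=> [h1 h2]; nra. Qed.

Lemma lip_sq (h g : param) c : 0 <= c -> (forall s j, `|h s j| <= c) -> (forall s j, `|g s j| <= c) ->
  tnorm (segre h - segre g) ^+ 2 <= K%:R * (S%:R * c ^+ 2) ^+ K' * pnorm2 (h - g) ^+ 2.
Proof.
move=> c0 hc gc.
rewrite segre_diff tnorm_sq.
apply: (le_trans (y := \sum_i (K%:R * \sum_k (segre (wk h g k) i) ^+ 2))).
  apply: ler_sum => i _; rewrite sum_ffunE.
  by have := sumsq_le (fun k => segre (wk h g k) i); rewrite card_ord.
rewrite -mulr_sumr exchange_big /=.
have Hk : forall k, \sum_i segre (wk h g k) i ^+ 2 <= (S%:R * c ^+ 2) ^+ K' * \sum_(s < S) (h s k - g s k) ^+ 2.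
  move=> k; rewrite -tnorm_sq tnorm_segre_sq (bigD1 k) //= mulrC.
  have -> : \sum_(s < S) wk h g k s k ^+ 2 = \sum_(s < S) (h s k - g s k) ^+ 2.
    by apply: eq_bigr => s _; rewrite mxE ltnn eqxx.
  apply: ler_wpM2r; first by apply: sumr_ge0 => s _; exact: sqr_ge0.
  apply: (le_trans (y := \prod_(j < K | j != k) (S%:R * c ^+ 2))).
    apply: ler_prod => j jk; rewrite sumr_ge0 /=; last by move=> s _; exact: sqr_ge0.
    apply: (le_trans (y := \sum_(s < S) c ^+ 2)); last by rewrite sumr_const card_ord mulr_natl.
    apply: ler_sum => s _; rewrite mxE; apply: sq_le.
    case: ifP => _; first exact: gc.
    case: ifP => [/eqP E|_]; last exact: hc.
    by move: jk; rewrite E eqxx.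
  by rewrite prodr_const cardC1 card_ord.
rewrite -mulrA; apply: ler_wpM2l => //.
rewrite /pnorm2 sqr_sqrtr; last by apply: sumr_ge0 => i _; apply: sumr_ge0 => j _; exact: sqr_ge0.
rewrite [X in _ <= _ * X]exchange_big mulr_sumr; apply: ler_sum => k _ /=.
apply: (le_trans (Hk k)); apply: ler_wpM2l; first by rewrite exprn_ge0 // mulr_ge0 // sqr_ge0.
by apply: ler_sum => s _; rewrite !mxE lexx.
Qed.

End Lip.

Section P.
Variables (R : realType) (S K' : nat).
Local Notation K := K'.+1.
Local Notation param := (param R S K).
Local Notation tensor := (tensor R S K).

Lemma colnorm_ge0 (h : param) k : 0 <= colnorm_inf h k.
Proof.
rewrite /colnorm_inf; apply: (big_ind (fun x => 0 <= x)) => //.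
by move=> x y x0 y0; rewrite le_max x0.
Qed.

Lemma colnorm_ub (h : param) i k : `|h i k| <= colnorm_inf h k.
Proof. exact: (le_bigmax 0 (fun i => `|h i k|) i). Qed.

Lemma tinf_ge0 (T : tensor) : 0 <= tnorm_inf T.
Proof.
rewrite /tnorm_inf; apply: (big_ind (fun x => 0 <= x)) => //.
by move=> x y x0 y0; rewrite le_max x0.
Qed.

Lemma tinf_ub (T : tensor) i : `|T i| <= tnorm_inf T.
Proof. exact: (le_bigmax 0 (fun i => `|T i|) i). Qed.

Lemma colnorm_arg (h : param) k (i0 : 'I_S) : exists i, colnorm_inf h k = `|h i k|.
Proof.
exists [arg max_(i > i0) `|h i k|]%O.
rewrite /colnorm_inf (bigmax_eq_arg 0 i0 xpredT (fun i => `|h i k|)) //.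
Qed.

Lemma colnorm_gt0 (h : param) k i : h i k != 0 -> 0 < colnorm_inf h k.
Proof. by move=> nz; apply: (lt_le_trans _ (colnorm_ub h i k)); rewrite normr_gt0. Qed.

Lemma prod_colnorm_le (h : param) : param_star h ->
  \prod_k colnorm_inf h k <= tnorm_inf (segre h).
Proof.
move=> st.
have: forall k, exists i, colnorm_inf h k = `|h i k|.
  by move=> k; have [i0 _] := st k; exact: colnorm_arg.
move/(_ _)/cid => F.
pose f : {ffun 'I_K -> 'I_S} := [ffun k => sval (F k)].
apply: le_trans (tinf_ub _ f); rewrite ffunE normr_prod le_eqVlt; apply/orP; left; apply/eqP.
by apply: eq_bigr => k _; rewrite ffunE; case: (F k).
Qed.

Lemma equiv_segre (h g : param) : param_equiv h g -> segre h = segre g.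
Proof.
move=> [lam [P1 Hl]]; apply/ffunP => i; rewrite !ffunE.
under eq_bigr => k _ do rewrite Hl.
by rewrite big_split /= P1 mul1r.
Qed.

Lemma colnorm_scale (h : param) (lam : 'I_K -> R) k : 0 <= lam k ->
  colnorm_inf (\matrix_(i, j) (lam j * h i j)) k = lam k * colnorm_inf h k.
Proof.
move=> l0; rewrite /colnorm_inf.
rewrite (big_morph (fun x => lam k * x) (id1 := 0) (op1 := Order.max) (fun x y => maxr_pMr x y l0)) ?mulr0 //.
by apply: eq_bigr => i _; rewrite mxE normrM (ger0_norm l0).
Qed.

Lemma diag_rep (h : param) : param_star h -> exists h', param_equiv h' h /\ param_diag h'.
Proof.
move=> st.
have cpos : forall k, 0 < colnorm_inf h k.
  by move=> k; have [i nz] := st k; exact: colnorm_gt0 nz.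
pose p := \prod_k colnorm_inf h k.
have p0 : 0 < p by apply: prodr_gt0 => k _.
pose q := powR p (K%:R^-1).
have q0 : 0 < q by apply: powR_gt0.
pose lam k := q / colnorm_inf h k.
have lam0 : forall k, 0 < lam k by move=> k; rewrite divr_gt0.
exists (\matrix_(i, j) (lam j * h i j)); split; [|split].
- exists lam; split; last by move=> i k; rewrite mxE.
  rewrite /lam prodf_div prodr_const card_ord.
  have -> : q ^+ K = p.
    rewrite -powR_mulrn ?(ltW q0) // /q -powRrM mulVf ?powRr1 ?(ltW p0) //.
    by rewrite pnatr_eq0.
  by rewrite divff // gt_eqF.
- move=> k; have [i nz] := st k; exists i; rewrite mxE mulf_neq0 //.
  exact: lt0r_neq0.
- move=> k l; rewrite !colnorm_scale ?(ltW (lam0 _)) // /lam !divfK //; exact: lt0r_neq0.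
Qed.

End P.

Section Key.
Variables (R : realType) (S K' : nat).
Local Notation K := K'.+1.
Local Notation param := (param R S K).
Local Notation tensor := (tensor R S K).

Lemma diag_col_le (h' : param) M : param_star h' -> param_diag h' ->
  tnorm_inf (segre h') <= M -> colnorm_inf h' ord0 <= powR M (K%:R^-1).
Proof.
move=> st [_ dg] le.
set a := colnorm_inf h' ord0.
have a0 : 0 <= a by exact: colnorm_ge0.
have aK : a ^+ K <= M.
  apply: le_trans _ le; apply: le_trans _ (prod_colnorm_le st).
  have -> : \prod_k colnorm_inf h' k = a ^+ K.
    by rewrite (eq_bigr (fun _ => a)) ?prodr_const ?card_ord // => k _; rewrite /a (dg k ord0).
  exact: lexx.
have -> : a = powR (a ^+ K) (K%:R^-1).
  by rewrite -powR_mulrn // -powRrM mulfV ?powRr1 // pnatr_eq0.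
apply: ge0_ler_powR => //; rewrite ?invr_ge0 // nnegrE ?exprn_ge0 //.
exact: le_trans (exprn_ge0 _ a0) aK.
Qed.


Lemma key (hs hbar : param) (C fe : R) : 0 < C -> 0 <= fe -> param_star hs -> param_star hbar ->
  d2 hs hbar <= C * Order.min (powR (tnorm_inf (segre hbar)) (K%:R^-1 - 1))
                              (powR (tnorm_inf (segre hs)) (K%:R^-1 - 1)) * fe ->
  tnorm (segre hs - segre hbar) <= C * powR S%:R (K'%:R / 2) * Num.sqrt K%:R * fe.
Proof.
move=> C0 fe0 sts stb Hd.
set A := tnorm_inf (segre hs); set B := tnorm_inf (segre hbar).
set M := Order.max A B.
have S0 : (0 < S)%N by case: (sts ord0) => i _; exact: (leq_ltn_trans (leq0n _) (ltn_ord i)).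
have A0 : 0 < A.
  apply: lt_le_trans (prod_colnorm_le sts); apply: prodr_gt0 => k _.
  by have [i nz] := sts k; exact: colnorm_gt0 nz.
have AM : A <= M by rewrite le_max lexx.
have BM : B <= M by rewrite le_max lexx orbT.
have M0 : 0 < M by exact: lt_le_trans A0 AM.
set Q := powR M (K%:R^-1 * K'%:R).
set Sp := powR S%:R (K'%:R / 2).
have Q0 : 0 < Q by exact: powR_gt0.
have Sp0 : 0 < Sp by apply: powR_gt0; rewrite ltr0n.
have Sp2 : Sp ^+ 2 = S%:R ^+ K'.
  by rewrite -powR_mulrn ?(ltW Sp0) // /Sp -powRrM mulfVK ?powR_mulrn ?pnatr_eq0.
have sK0 : 0 < Num.sqrt (K%:R : R) by have := sqrtr_gt0 (K%:R : R); rewrite ltr0n => ->.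
set D := Num.sqrt K%:R * Sp * Q.
have D0 : 0 < D by rewrite !mulr_gt0.
pose E := [set r : R | exists h' g' : param,
           [/\ param_equiv h' hs, param_diag h', param_equiv g' hbar, param_diag g'
              & r = pnorm2 (h' - g')]]%classic.
have step1 : forall r, E r -> tnorm (segre hs - segre hbar) <= D * r.
  move=> r [h' [g' [eh dh eg dg ->]]].
  rewrite -(equiv_segre eh) -(equiv_segre eg).
  set a := colnorm_inf h' ord0; set b := colnorm_inf g' ord0; set c := Order.max a b.
  have a0 : 0 <= a by exact: colnorm_ge0.
  have c0 : 0 <= c by rewrite le_max a0.
  have hc : forall s j, `|h' s j| <= c.
    move=> s j; apply: le_trans (colnorm_ub h' s j) _; rewrite (dh.2 j ord0) le_max lexx //.
  have gc : forall s j, `|g' s j| <= c.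
    move=> s j; apply: le_trans (colnorm_ub g' s j) _; rewrite (dg.2 j ord0) le_max lexx orbT //.
  have L := lip_sq c0 hc gc.
  have cQ : c ^+ K' <= Q.
    have hM : a <= powR M (K%:R^-1).
      apply: diag_col_le dh.1 dh _; rewrite (equiv_segre eh) //.
    have gM : b <= powR M (K%:R^-1).
      apply: diag_col_le dg.1 dg _; rewrite (equiv_segre eg) //.
    have cM : c <= powR M (K%:R^-1) by rewrite ge_max hM gM.
    rewrite /Q powRrM powR_mulrn ?powR_ge0 //.
    by apply: lerXn2r; rewrite ?nnegrE ?powR_ge0.
  have r0 : 0 <= pnorm2 (h' - g') by exact: sqrtr_ge0.
  rewrite -(@ler_pXn2r _ 2) // ?nnegrE ?mulr_ge0 ?(ltW D0) ?sqrtr_ge0 //.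
  apply: le_trans L _.
  rewrite /D !exprMn Sp2 (sqr_sqrtr (ler0n R K)).
  apply: ler_wpM2r; first exact: sqr_ge0.
  rewrite -!mulrA; apply: ler_wpM2l; first exact: ler0n.
  apply: ler_wpM2l; first by rewrite exprn_ge0 ?ler0n.
  rewrite -expr2.
  by apply: lerXn2r; rewrite ?nnegrE ?exprn_ge0 ?(ltW Q0).
  exact: (ltW Sp0). exact: (ltW Q0).

have En : (E !=set0)%classic.
  have [h1 [eh dh]] := diag_rep sts; have [g1 [eg dg]] := diag_rep stb.
  by exists (pnorm2 (h1 - g1)); exists h1, g1; split.
set t := tnorm _.
have Hinf : D^-1 * t <= d2 hs hbar.
  have -> : d2 hs hbar = inf E by [].
  apply: (lb_le_inf En) => r Er; rewrite ler_pdivrMl //; exact: step1.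
have Hmin : Order.min (powR B (K%:R^-1 - 1)) (powR A (K%:R^-1 - 1)) <= powR M (K%:R^-1 - 1).
  rewrite /M; case: (leP A B) => AB.
    by rewrite ge_min lexx.
  by rewrite ge_min lexx orbT.
have QM : Q * powR M (K%:R^-1 - 1) = 1.
  have e0 : (K%:R^-1 * K'%:R + (K%:R^-1 - 1) : R) = 0.
    rewrite -addn1 natrD; field.
    by rewrite natr1 pnatr_eq0.
  rewrite /Q -powRD ?e0 ?powRr0 //.
  by rewrite eqxx /= gt_eqF.
have := le_trans Hinf Hd; rewrite ler_pdivrMl // => H1.
apply: le_trans H1 _.
apply: (le_trans (y := D * (C * powR M (K%:R^-1 - 1) * fe))).
  apply: ler_wpM2l; first exact: ltW.
  apply: ler_wpM2r => //; apply: ler_wpM2l; [exact: ltW | exact: Hmin].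
have EQ : D * (C * powR M (K%:R^-1 - 1) * fe) = C * Sp * Num.sqrt K%:R * fe.
  rewrite /D; transitivity (C * Sp * Num.sqrt K%:R * fe * (Q * powR M (K%:R^-1 - 1))); first ring.
  by rewrite QM mulr1.
by rewrite EQ.
Qed.

End Key.

Section Sig.
Variables (R : realType) (S K' : nat) (m : nat -> nat).
Local Notation K := K'.+1.
Variable A : {linear tensor R S K -> 'M[R]_(m 0, m K)}.
Local Notation tensor := (tensor R S K).

Lemma frob_ge0 p q (X : 'M[R]_(p, q)) : 0 <= frob X.
Proof. exact: sqrtr_ge0. Qed.

Lemma tnorm_ge0 (T : tensor) : 0 <= tnorm T.
Proof. exact: sqrtr_ge0. Qed.

Lemma frob_sq p q (X : 'M[R]_(p, q)) : frob X ^+ 2 = \sum_i \sum_j X i j ^+ 2.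
Proof.
by rewrite /frob sqr_sqrtr // sumr_ge0 // => i _; rewrite sumr_ge0 // => j _; exact: sqr_ge0.
Qed.

Lemma frobZ p q (c : R) (X : 'M[R]_(p, q)) : frob (c *: X) = `|c| * frob X.
Proof.
rewrite /frob -sqrtr_sqr -sqrtrM ?sqr_ge0 // mulr_sumr; congr Num.sqrt.
apply: eq_bigr => i _; rewrite mulr_sumr; apply: eq_bigr => j _; rewrite mxE; exact: exprMn.
Qed.

Lemma tnormZ (c : R) (T : tensor) : tnorm (c *: T) = `|c| * tnorm T.
Proof.
rewrite /tnorm -sqrtr_sqr -sqrtrM ?sqr_ge0 // mulr_sumr; congr Num.sqrt.
apply: eq_bigr => i _; rewrite ffunE; exact: exprMn.
Qed.

Definition dlt (i : midx S K) : tensor := [ffun j => (i == j)%:R].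

Lemma tensor_dec (T : tensor) : T = \sum_i T i *: dlt i.
Proof.
apply/ffunP => j; rewrite sum_ffunE (bigD1 j) //= big1 ?addr0.
  by rewrite !ffunE eqxx; symmetry; exact: mulr1.
by move=> i ij; rewrite !ffunE (negbTE ij); exact: mulr0.
Qed.

Lemma A_bound : exists W, 0 <= W /\ forall T, frob (A T) ^+ 2 <= W * tnorm T ^+ 2.
Proof.
set N : R := #|{: midx S K}|%:R.
set W0 := \sum_i frob (A (dlt i)) ^+ 2.
exists (N * W0); split.
  by rewrite mulr_ge0 ?ler0n // sumr_ge0 // => i _; exact: sqr_ge0.
move=> T.
rewrite frob_sq {1}(tensor_dec T) linear_sum.
apply: (le_trans (y := \sum_p \sum_q (N * \sum_i (T i * A (dlt i) p q) ^+ 2))).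
  apply: ler_sum => p _; apply: ler_sum => q _.
  rewrite summxE; under eq_bigr => i _ do rewrite linearZ mxE.
  exact: sumsq_le.
rewrite tnorm_sq.
under eq_bigr => p _ do rewrite -mulr_sumr.
rewrite -mulr_sumr -mulrA; apply: ler_wpM2l; first exact: ler0n.
under eq_bigr => p _ do rewrite exchange_big /=.
rewrite exchange_big /= mulr_sumr; apply: ler_sum => i _.
have -> : \sum_p \sum_q (T i * A (dlt i) p q) ^+ 2 = T i ^+ 2 * frob (A (dlt i)) ^+ 2.
  rewrite frob_sq mulr_sumr; apply: eq_bigr => p _; rewrite mulr_sumr; apply: eq_bigr => q _.
  exact: exprMn.
rewrite mulrC; apply: ler_wpM2r; first exact: sqr_ge0.
rewrite /W0 (bigD1 i) //= lerDl; apply: sumr_ge0 => j _; exact: sqr_ge0.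
Qed.


Lemma tnorm0 : tnorm (0 : tensor) = 0.
Proof. by rewrite -[0 : tensor](scale0r 0) tnormZ normr0 mul0r. Qed.

Lemma sigma_bound T : frob (A T) <= sigma_max A * tnorm T.
Proof.
have [W [W0 HW]] := A_bound.
set E := [set r | exists T, tnorm T <= 1 /\ r = frob (A T)]%classic.
have ub : has_ubound E.
  exists (Num.sqrt W) => r [T1 [n1 ->]].
  rewrite -[frob _]ger0_norm ?frob_ge0 // -sqrtr_sqr ler_sqrt //.
  apply: le_trans (HW T1) _.
  have t0 := tnorm_ge0 T1.
  have : tnorm T1 ^+ 2 <= 1 by nra.
  move=> h; rewrite -[X in _ <= X]mulr1; exact: ler_wpM2l.
have ET : forall T1, tnorm T1 <= 1 -> frob (A T1) <= sigma_max A.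
  by move=> T1 n1; apply: (ub_le_sup ub); exists T1.
have s0 : 0 <= sigma_max A.
  by apply: le_trans (frob_ge0 (A 0)) (ET 0 _); rewrite tnorm0 ler01.
have t0 := tnorm_ge0 T.
case: (ltrP 0 (tnorm T)) => tp.
  have := ET ((tnorm T)^-1 *: T).
  rewrite tnormZ linearZ frobZ ger0_norm ?invr_ge0 // mulVf ?gt_eqF // lexx => /(_ isT).
  by rewrite ler_pdivrMl // mulrC.
have tz : tnorm T = 0 by apply/eqP; rewrite eq_le tp t0.
have := HW T; rewrite tz expr0n /= mulr0 => h.
have := frob_ge0 (A T); rewrite mulr0; nra.
Qed.

End Sig.

Section Main.
Variables (R : realType) (S K' : nat).
Local Notation K := K'.+1.
Local Notation param := (param R S K).
Local Notation tensor := (tensor R S K).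

Lemma nostar_segre (h : param) : ~ param_star h -> segre h = 0.
Proof.
move=> nst; apply/ffunP => i; rewrite !ffunE; apply/eqP; apply: contraT => nz.
exfalso; apply: nst => k; exists (i k).
by move/prodf_neq0: nz => /(_ k isT).
Qed.

Lemma proj_segre (s s' : suppT S K) (h : param) :
  (param_on s h \/ param_on s' h) -> proj_supp (supp_union s s') (segre h) = segre h.
Proof.
move=> hon; apply/ffunP => i; rewrite !ffunE; case: ifP => // ni.
apply/esym/eqP/prodf_eq0.
move/negbT: ni; rewrite /in_supp negb_forall => /existsP [k nk]; exists k => //.
rewrite ffunE !inE negb_or in nk; case/andP: nk => n1 n2.
by case: hon => H; rewrite H.
Qed.

Lemma proj_add (s : suppT S K) (X Y : tensor) : proj_supp s (X + Y) = proj_supp s X + proj_supp s Y.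
Proof. by apply/ffunP => i; rewrite !ffunE; case: ifP => //; rewrite addr0. Qed.

Definition scol (h : param) (c : R) : param :=
  \matrix_(i, k) (if k == ord0 then c * h i k else h i k).

Lemma segre_scol (h : param) c : segre (scol h c) = c *: segre h.
Proof.
apply/ffunP => i; rewrite !ffunE (bigD1 ord0) //= [in RHS](bigD1 ord0) //= mxE eqxx.
rewrite -mulrA; congr (_ * (_ * _)).
by apply: eq_bigr => k /negbTE nk; rewrite mxE nk.
Qed.

Lemma scol_on s (h : param) c : param_on s h -> param_on s (scol h c).
Proof. by move=> H k i ni; rewrite mxE H // mulr0; case: ifP. Qed.

Lemma scol_star (h : param) c : c != 0 -> param_star h -> param_star (scol h c).
Proof.
move=> c0 st k; have [i nz] := st k; exists i; rewrite mxE; case: ifP => // _.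
by rewrite mulf_neq0.
Qed.


Lemma main_K (m : nat -> nat) (A : {linear tensor -> 'M[R]_(m 0, m K)})
  (Mf : {set suppT S K}) (C delta : R) :
  0 < C -> stable_recovery A Mf C delta ->
  deep_NSP A Mf (C * powR S%:R (K'%:R / 2) * Num.sqrt K%:R * sigma_max A) delta.
Proof.
move=> C0 SR.
set L := C * powR S%:R (K'%:R / 2) * Num.sqrt K%:R.
have L0 : 0 <= L by rewrite !mulr_ge0 ?(ltW C0) ?powR_ge0 ?sqrtr_ge0.
have f0 : frob (0 : 'M[R]_(m 0, m K)) = 0.
  by rewrite -(scale0r (0 : 'M[R]_(m 0, m K))) frobZ normr0 mul0r.
have key' : forall s1 s2 (hb hs : param), s1 \in Mf -> s2 \in Mf -> param_on s1 hb -> param_star hb ->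
    param_on s2 hs -> param_star hs -> frob (A (segre hs - segre hb)) <= delta ->
    tnorm (segre hs - segre hb) <= L * frob (A (segre hs - segre hb)).
  move=> s1 s2 hb hs H1 H2 on1 st1 on2 st2 Hd.
  rewrite linearB in Hd *.
  apply: key => //; first exact: frob_ge0.
  have := SR s1 H1 hb on1 st1 (A (segre hs) - A (segre hb)) Hd s2 H2 hs on2 st2; apply.
  by rewrite [A (segre hb) + _]addrC subrK subrr f0 frob_ge0.
have dbl : forall s1 (hh : param), s1 \in Mf -> param_on s1 hh -> param_star hh ->
    frob (A (segre hh)) <= delta -> tnorm (segre hh) <= L * frob (A (segre hh)).
  move=> s1 hh H1 on1 st1 Hd.
  have E : segre (scol hh 2) - segre hh = segre hh by rewrite segre_scol scaler_nat mulr2n addrK.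
  rewrite -E; apply: (key' _ _ _ _ H1 H1 on1 st1 (scol_on _ on1) (scol_star _ st1)) => //.
    by rewrite pnatr_eq0.
  by rewrite E.
move=> s s' sM s'M T [h [g [hon [gon ->]]]] HA T' HT'.
have P1 : proj_supp (supp_union s s') (segre h) = segre h by apply: proj_segre; left.
have P2 : proj_supp (supp_union s s') (segre g) = segre g by apply: proj_segre; right.
rewrite proj_add P1 P2 in HA.
have EA : A (segre h + segre g - proj_supp (supp_union s s') T') = A (segre h + segre g).
  by rewrite linearB HT' subr0.
have fin : frob (A (segre h + segre g)) <= sigma_max A * tnorm (segre h + segre g - proj_supp (supp_union s s') T').
  by rewrite -EA; exact: sigma_bound.
suff H : tnorm (segre h + segre g) <= L * frob (A (segre h + segre g)).
  apply: le_trans H _; rewrite -/L -mulrA; exact: ler_wpM2l.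
case: (pselect (param_star h)) => sth; case: (pselect (param_star g)) => stg.
- have E : segre (scol g (-1)) - segre h = - (segre h + segre g).
    by rewrite segre_scol scaleN1r opprD addrC.
  have := key' s s' h (scol g (-1)) sM s'M hon sth (scol_on _ gon) (scol_star _ stg).
  rewrite E linearN -!scaleN1r tnormZ frobZ normrN1 !mul1r; apply => //.
  by rewrite oppr_eq0 oner_eq0.
- rewrite (nostar_segre stg) addr0 in HA *; exact: dbl sM hon sth HA.
- rewrite (nostar_segre sth) add0r in HA *; exact: dbl s'M gon stg HA.
- rewrite (nostar_segre sth) (nostar_segre stg) addr0 tnorm0; apply: mulr_ge0 => //; exact: frob_ge0.
Qed.

End Main.


Unset Implicit Arguments.
Set Strict Implicit.

Theorem theorem4 (R : realType) (K S : nat) (m : nat -> nat)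
  (M : forall k : nat, {linear 'rV[R]_S -> 'M[R]_(m k, m k.+1)})
  (A : {linear tensor R S K -> 'M[R]_(m 0, m K)})
  (Mf : {set suppT S K}) (C delta : R) :
  (1 <= K)%N -> (1 <= S)%N -> (forall k, (k <= K)%N -> (0 < m k)%N) ->
  (forall h : param R S K, A (segre h) = chain M h K) ->
  0 < C -> 0 < delta ->
  stable_recovery A Mf C delta ->
  deep_NSP A Mf
    (C * powR (S%:R) ((K%:R - 1) / 2) * Num.sqrt (K%:R) * sigma_max A) delta.
Proof.
case: K M A Mf => [|K'] M A Mf hK; first by [].
move=> _ _ _ C0 _ SR.
have -> : ((K'.+1)%:R - 1 : R) = K'%:R by rewrite -natr1 addrK.
exact: main_K.
Qed.
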